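(* Let $\mathcal H=L^2(S^1,\mathbb C^{N+1})$ and let $\mathcal H_+\subset\mathcal H$ be the subspace of boundary values of holomorphic maps $\{|z|<1\}\to\mathbb C^{N+1}$. Let $\mathbb P\subset\mathcal H$ be a closed subspace such that $z^{-1}\mathbb P\subset\mathbb P$ and $\mathbb P\oplus\mathcal H_+=\mathcal H$ (direct sum, not necessarily orthogonal). Then $\bigcap_{n\ge0}z^{-n}\mathbb P=\{0\}$.
   Context: Here $z$ denotes the coordinate function on $S^1=\{|z|=1\}$, acting on $\mathcal H$ by multiplication. *)

(* Defs.v *)
From Stdlib Require Import Reals ZArith.
Open Scope R_scope.

Definition C : Type := (R * R)%type.
Definition C0 : C := (0, 0).
Definition Cadd (a b : C) : C := (fst a + fst b, snd a + snd b).
Definition Cmul (a b : C) : C :=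
  (fst a * fst b - snd a * snd b, fst a * snd b + snd a * fst b).
Definition Csub (a b : C) : C := (fst a - fst b, snd a - snd b).
Definition Cnorm2 (a : C) : R := fst a ^ 2 + snd a ^ 2.

(* L^2(S^1, C^{N+1}) is modelled, via Fourier series (Plancherel), as the
   space of square-summable sequences of Fourier coefficients
   f : Z -> (nat -> C), where f k is the k-th Fourier coefficient, a vector
   of C^{N+1} whose components j > N are zero. *)
Definition coef_seq : Type := Z -> nat -> C.

Definition vnorm2 (N : nat) (v : nat -> C) : R :=
  sum_f_R0 (fun j => Cnorm2 (v j)) N.

(* the series over Z of the squared coefficient norms, folded over nat *)
Definition l2_terms (N : nat) (f : coef_seq) (n : nat) : R :=
  vnorm2 N (f (Z.of_nat n)) + vnorm2 N (f (- (Z.of_nat n + 1))%Z).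

Definition inH (N : nat) (f : coef_seq) : Prop :=
  (forall k j, (N < j)%nat -> f k j = C0) /\
  exists l, infinite_sum (l2_terms N f) l.

(* H_+ : boundary values of holomorphic maps on the unit disc
   (Hardy space): elements of H with vanishing negative Fourier modes. *)
Definition inHplus (N : nat) (f : coef_seq) : Prop :=
  inH N f /\ forall k j, (k < 0)%Z -> f k j = C0.

Definition fzero : coef_seq := fun _ _ => C0.
Definition fadd (f g : coef_seq) : coef_seq := fun k j => Cadd (f k j) (g k j).
Definition fsub (f g : coef_seq) : coef_seq := fun k j => Csub (f k j) (g k j).
Definition fscale (c : C) (f : coef_seq) : coef_seq := fun k j => Cmul c (f k j).

Definition zinv_pow (n : nat) (f : coef_seq) : coef_seq :=
  fun k j => f (k + Z.of_nat n)%Z j.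

Definition l2_converges (N : nat) (u : nat -> coef_seq) (f : coef_seq) : Prop :=
  forall eps, 0 < eps -> exists M, forall m, (M <= m)%nat ->
    exists l, infinite_sum (l2_terms N (fsub (u m) f)) l /\ l < eps.

Definition is_subspace (N : nat) (P : coef_seq -> Prop) : Prop :=
  (forall f, P f -> inH N f) /\
  P fzero /\
  (forall f g, P f -> P g -> P (fadd f g)) /\
  (forall c f, P f -> P (fscale c f)).

Definition is_closed (N : nat) (P : coef_seq -> Prop) : Prop :=
  forall (u : nat -> coef_seq) (f : coef_seq),
    (forall m, P (u m)) -> inH N f -> l2_converges N u f -> P f.

Definition direct_sum_Hplus (N : nat) (P : coef_seq -> Prop) : Prop :=
  (forall f, inH N f -> exists p h, P p /\ inHplus N h /\
      forall k j, f k j = Cadd (p k j) (h k j)) /\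
  (forall f, P f -> inHplus N f -> forall k j, f k j = C0).

(* Main.v *)
From Stdlib Require Import Reals ZArith Lra Lia Psatz FunctionalExtensionality ClassicalEpsilon Classical.
Require Import Defs.
Open Scope R_scope.

Definition Sn (N : nat) (f : coef_seq) (n : nat) : R := sum_f_R0 (l2_terms N f) n.
Definition nb (N : nat) (f : coef_seq) (c : R) : Prop := forall n, Sn N f n <= c.
Definition rs (t : R) : C := (t, 0).

Lemma Cnorm2_ge0 a : 0 <= Cnorm2 a.
Proof. unfold Cnorm2. destruct a as [x y]; simpl. nra. Qed.

Lemma sum_lin (F G : nat -> R) (a b : R) n :
  sum_f_R0 (fun i => a * F i + b * G i) n = a * sum_f_R0 F n + b * sum_f_R0 G n.
Proof. induction n; simpl; [ring| rewrite IHn; ring]. Qed.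

Lemma sum_ge0 (F : nat -> R) n : (forall i, 0 <= F i) -> 0 <= sum_f_R0 F n.
Proof. intros; apply cond_pos_sum; auto. Qed.

Lemma sum_ge_term (F : nat -> R) n i : (forall i, 0 <= F i) -> (i <= n)%nat -> F i <= sum_f_R0 F n.
Proof.
  intros H Hi; induction n.
  - assert (i = 0)%nat by lia; subst; simpl; lra.
  - destruct (Nat.eq_dec i (S n)).
    + subst. simpl. pose proof (sum_ge0 F n H). lra.
    + simpl. assert (i <= n)%nat by lia. specialize (IHn H0). specialize (H (S n)). lra.
Qed.

Lemma vnorm2_ge0 N v : 0 <= vnorm2 N v.
Proof. apply sum_ge0; intros; apply Cnorm2_ge0. Qed.

Lemma l2_terms_ge0 N f i : 0 <= l2_terms N f i.
Proof. unfold l2_terms. pose proof (vnorm2_ge0 N (f (Z.of_nat i))). pose proof (vnorm2_ge0 N (f (- (Z.of_nat i + 1))%Z)). lra. Qed.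

Lemma Sn_ge0 N f n : 0 <= Sn N f n.
Proof. apply sum_ge0; intros; apply l2_terms_ge0. Qed.

Lemma Sn_mono N f n m : (n <= m)%nat -> Sn N f n <= Sn N f m.
Proof.
  intros H; induction H; [lra|]. unfold Sn in *; simpl. pose proof (l2_terms_ge0 N f (S m)). lra.
Qed.

Lemma Sn_le_lin N (h f g : coef_seq) (a b : R) :
  (forall k j, Cnorm2 (h k j) <= a * Cnorm2 (f k j) + b * Cnorm2 (g k j)) ->
  forall n, Sn N h n <= a * Sn N f n + b * Sn N g n.
Proof.
  intros H n. unfold Sn. rewrite <- sum_lin. apply sum_Rle; intros i _.
  unfold l2_terms, vnorm2.
  set (k2 := (- (Z.of_nat i + 1))%Z). set (k1 := Z.of_nat i).
  assert (E: forall k, sum_f_R0 (fun j => Cnorm2 (h k j)) N <=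
     a * sum_f_R0 (fun j => Cnorm2 (f k j)) N + b * sum_f_R0 (fun j => Cnorm2 (g k j)) N).
  { intros k. rewrite <- sum_lin. apply sum_Rle; intros; apply H. }
  pose proof (E k1); pose proof (E k2). lra.
Qed.

Lemma coord_le N f k j : (j <= N)%nat ->
  Cnorm2 (f k j) <= Sn N f (Z.to_nat (if (k <? 0)%Z then (- k - 1) else k)%Z).
Proof.
  intros Hj. unfold Sn.
  set (i := Z.to_nat _).
  eapply Rle_trans; [| apply (sum_ge_term (l2_terms N f) i i); [apply l2_terms_ge0| apply le_n]].
  unfold l2_terms, i.
  assert (A: Cnorm2 (f k j) <= vnorm2 N (f k)).
  { unfold vnorm2. apply (sum_ge_term (fun j => Cnorm2 (f k j))); auto. intros; apply Cnorm2_ge0. }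
  destruct (Z.ltb_spec k 0).
  - replace (- (Z.of_nat (Z.to_nat (- k - 1)) + 1))%Z with k by lia.
    pose proof (vnorm2_ge0 N (f (Z.of_nat (Z.to_nat (- k - 1))))). lra.
  - replace (Z.of_nat (Z.to_nat k)) with k by lia.
    pose proof (vnorm2_ge0 N (f (- (k + 1))%Z)). lra.
Qed.

Lemma Cadd_ineq a b l : 0 < l ->
  Cnorm2 (Cadd a b) <= (1 + l) * Cnorm2 a + (1 + / l) * Cnorm2 b.
Proof.
  intros Hl. destruct a as [x1 y1]; destruct b as [x2 y2]; unfold Cnorm2, Cadd; simpl.
  assert (H: forall x y, (x + y)^2 <= (1 + l) * x^2 + (1 + / l) * y^2).
  { intros x y. assert (0 <= (l * x - y)^2 / l).
    { unfold Rdiv; apply Rmult_le_pos; [apply pow2_ge_0| apply Rlt_le, Rinv_0_lt_compat; lra]. }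
    replace ((1 + l) * x ^ 2 + (1 + / l) * y ^ 2) with ((x+y)^2 + (l * x - y)^2 / l).
    lra. field. lra. }
  pose proof (H x1 x2); pose proof (H y1 y2). lra.
Qed.

Lemma Csub_ineq a b l : 0 < l ->
  Cnorm2 (Csub a b) <= (1 + l) * Cnorm2 a + (1 + / l) * Cnorm2 b.
Proof.
  intros Hl. replace (Csub a b) with (Cadd a (- fst b, - snd b)).
  - replace (Cnorm2 b) with (Cnorm2 (- fst b, - snd b)). apply Cadd_ineq; auto.
    unfold Cnorm2; simpl; ring.
  - destruct a, b; unfold Csub, Cadd; simpl; f_equal; ring.
Qed.

Lemma Cmul_rs t a : Cnorm2 (Cmul (rs t) a) <= t^2 * Cnorm2 a + 0 * Cnorm2 a.
Proof. destruct a; unfold Cnorm2, Cmul, rs; simpl. nra. Qed.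

Lemma lam_lemma X a b : 0 <= a -> 0 <= b ->
  (forall l, 0 < l -> X <= (1 + l) * a^2 + (1 + / l) * b^2) -> X <= (a + b)^2.
Proof.
  intros Ha Hb H.
  destruct (Req_dec a 0) as [Ea|Ea]; [|destruct (Req_dec b 0) as [Eb|Eb]].
  - subst. destruct (Rle_dec X ((0+b)^2)) as [|Hn]; auto. exfalso.
    assert (Hp: 0 < X - b^2) by nra.
    set (t := / (2 * (b^2 + 1))).
    assert (Ht: 0 < t) by (unfold t; apply Rinv_0_lt_compat; nra).
    assert (Ht2: t * (2 * (b^2+1)) = 1) by (unfold t; field; nra).
    set (l := / ((X - b^2) * t)).
    assert (Hl: 0 < l) by (unfold l; apply Rinv_0_lt_compat; nra).
    specialize (H l Hl). unfold l in H. rewrite Rinv_inv in H. nra.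
  - subst. destruct (Rle_dec X ((a+0)^2)) as [|Hn]; auto. exfalso.
    assert (Hp: 0 < X - a^2) by nra.
    set (t := / (2 * (a^2 + 1))).
    assert (Ht: 0 < t) by (unfold t; apply Rinv_0_lt_compat; nra).
    assert (Ht2: t * (2 * (a^2+1)) = 1) by (unfold t; field; nra).
    set (l := (X - a^2) * t).
    assert (Hl: 0 < l) by (unfold l; nra).
    specialize (H l Hl). unfold l in H. nra.
  - assert (0 < a) by lra. assert (0 < b) by lra.
    specialize (H (b / a) ltac:(apply Rdiv_lt_0_compat; lra)).
    replace ((1 + b / a) * a ^ 2 + (1 + / (b / a)) * b ^ 2) with ((a+b)^2) in H; auto.
    field. lra.
Qed.

Ltac ceq := unfold fadd, fsub, fscale, zinv_pow, Cadd, Csub, Cmul, rs, C0, fzero;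
  apply injective_projections; simpl; ring.

Lemma cv_le_ev (u : nat -> R) l c : Un_cv u l -> (exists M0, forall n, (M0 <= n)%nat -> u n <= c) -> l <= c.
Proof.
  intros Hu [M0 HM]. destruct (Rle_dec l c) as [|Hn]; auto. exfalso.
  destruct (Hu (l - c)) as [M1 HM1]; [lra|].
  specialize (HM1 (max M0 M1) ltac:(lia)). specialize (HM (max M0 M1) ltac:(lia)).
  unfold Rdist in HM1. apply Rabs_def2 in HM1. lra.
Qed.

Lemma nb_ge0 N f c : nb N f c -> 0 <= c.
Proof. intros H. specialize (H 0%nat). pose proof (Sn_ge0 N f 0). lra. Qed.

Lemma nb_weaken N f c c' : c <= c' -> nb N f c -> nb N f c'.
Proof. intros H1 H2 n. specialize (H2 n). lra. Qed.

Lemma nb_ext N f g c : (forall k j, f k j = g k j) -> nb N f c -> nb N g c.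
Proof.
  intros H. replace g with f; auto.
  apply functional_extensionality; intro k; apply functional_extensionality; intro j; auto.
Qed.

Lemma nb_lim N f c : (forall d, 0 < d -> nb N f (c + d)) -> nb N f c.
Proof.
  intros H n. destruct (Rle_dec (Sn N f n) c) as [|Hn]; auto. exfalso.
  specialize (H ((Sn N f n - c)/2) ltac:(lra) n). lra.
Qed.

Lemma nb_add N a b s t : 0 <= s -> 0 <= t -> nb N a (s^2) -> nb N b (t^2) -> nb N (fadd a b) ((s+t)^2).
Proof.
  intros Hs Ht Ha Hb n. apply lam_lemma; auto. intros l Hl.
  pose proof (Sn_le_lin N (fadd a b) a b (1 + l) (1 + / l)) as E.
  assert (0 < / l) by (apply Rinv_0_lt_compat; lra).
  specialize (E ltac:(intros; unfold fadd; apply Cadd_ineq; auto) n).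
  specialize (Ha n); specialize (Hb n). nra.
Qed.

Lemma nb_sub N a b s t : 0 <= s -> 0 <= t -> nb N a (s^2) -> nb N b (t^2) -> nb N (fsub a b) ((s+t)^2).
Proof.
  intros Hs Ht Ha Hb n. apply lam_lemma; auto. intros l Hl.
  pose proof (Sn_le_lin N (fsub a b) a b (1 + l) (1 + / l)) as E.
  assert (0 < / l) by (apply Rinv_0_lt_compat; lra).
  specialize (E ltac:(intros; unfold fsub; apply Csub_ineq; auto) n).
  specialize (Ha n); specialize (Hb n). nra.
Qed.

Lemma nb_scale N a c t : nb N a c -> nb N (fscale (rs t) a) (t^2 * c).
Proof.
  intros Ha n. pose proof (Sn_le_lin N (fscale (rs t) a) a a (t^2) 0) as E.
  specialize (E ltac:(intros; unfold fscale; apply Cmul_rs) n).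
  specialize (Ha n). pose proof (pow2_ge_0 t). nra.
Qed.

Lemma nb_coord N f c k j : (j <= N)%nat -> nb N f c -> Cnorm2 (f k j) <= c.
Proof. intros Hj H. eapply Rle_trans; [apply (coord_le N f k j Hj)| apply H]. Qed.

Lemma inH_nb N f : inH N f -> exists c, nb N f c.
Proof.
  intros [_ [l Hl]]. exists l. intros n. apply (growing_ineq (sum_f_R0 (l2_terms N f))); auto.
  intros m. simpl. pose proof (l2_terms_ge0 N f (S m)). lra.
Qed.

Lemma nb_sum N f c : nb N f c -> exists l, infinite_sum (l2_terms N f) l /\ l <= c.
Proof.
  intros H.
  assert (G: Un_growing (sum_f_R0 (l2_terms N f))).
  { intros m. simpl. pose proof (l2_terms_ge0 N f (S m)). lra. }
  destruct (growing_cv _ G) as [l Hl].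
  { exists c. intros x [i ->]. apply H. }
  exists l. split; auto. apply (cv_le_ev _ _ _ Hl). exists 0%nat. intros; apply H.
Qed.

Lemma nb_inH N f c : (forall k j, (N < j)%nat -> f k j = C0) -> nb N f c -> inH N f.
Proof. intros Hs H. split; auto. destruct (nb_sum N f c H) as [l [Hl _]]. eauto. Qed.

Lemma nb_zero N : nb N fzero 0.
Proof.
  intros n. unfold Sn. rewrite (sum_eq _ (fun _ => 0)).
  - induction n; simpl; lra.
  - intros. unfold l2_terms, vnorm2, fzero, C0, Cnorm2. simpl.
    assert (Z0: sum_f_R0 (fun _ : nat => 0) N = 0) by (clear; induction N; simpl; lra).
    rewrite !(sum_eq _ (fun _ => 0)); try (intros; simpl; ring). rewrite Z0; ring.
Qed.

Definition lim_of (u : nat -> R) : R := epsilon (inhabits 0) (fun l => Un_cv u l).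
Lemma lim_of_spec u : (exists l, Un_cv u l) -> Un_cv u (lim_of u).
Proof. intros H. unfold lim_of. apply epsilon_spec. auto. Qed.

Lemma cv_const (c : R) : Un_cv (fun _ => c) c.
Proof. intros e He. exists 0%nat. intros. unfold Rdist. rewrite Rminus_diag, Rabs_R0. lra. Qed.

Lemma sum_cv (F : nat -> nat -> R) (G : nat -> R) n :
  (forall i, (i <= n)%nat -> Un_cv (fun M => F M i) (G i)) ->
  Un_cv (fun M => sum_f_R0 (F M) n) (sum_f_R0 G n).
Proof.
  induction n; intros H; simpl.
  - apply H; lia.
  - apply CV_plus; [apply IHn; intros; apply H; lia| apply H; lia].
Qed.

Lemma Cnorm2_cv (g : nat -> C) (x : C) :
  Un_cv (fun M => fst (g M)) (fst x) -> Un_cv (fun M => snd (g M)) (snd x) ->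
  Un_cv (fun M => Cnorm2 (g M)) (Cnorm2 x).
Proof.
  intros H1 H2. unfold Cnorm2. simpl.
  apply CV_plus; apply CV_mult; auto; apply CV_mult; auto; apply cv_const.
Qed.

Lemma Sn_cv N (g : nat -> coef_seq) (h : coef_seq) n :
  (forall k j, (j <= N)%nat -> Un_cv (fun M => fst (g M k j)) (fst (h k j)) /\
                               Un_cv (fun M => snd (g M k j)) (snd (h k j))) ->
  Un_cv (fun M => Sn N (g M) n) (Sn N h n).
Proof.
  intros H. unfold Sn. apply sum_cv. intros i _. unfold l2_terms, vnorm2.
  apply CV_plus; apply sum_cv; intros j Hj; apply Cnorm2_cv; apply H; auto.
Qed.

Lemma sq_le_abs x r : x^2 <= r^2 -> 0 <= r -> Rabs x <= r.
Proof. intros H Hr. destruct (Rcase_abs x) as [Hx|Hx]; [rewrite Rabs_left| rewrite Rabs_right]; nra. Qed.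

Lemma coord_cauchy (w : nat -> R) (rho : nat -> R) :
  (forall e, 0 < e -> exists m, rho m < e) ->
  (forall m M, (m <= M)%nat -> Rabs (w M - w m) <= rho m) ->
  Cauchy_crit w.
Proof.
  intros Hr H e He. destruct (Hr (e/2) ltac:(lra)) as [m0 Hm0]. exists m0.
  intros n m Hn Hm. unfold Rdist.
  pose proof (H m0 n Hn). pose proof (H m0 m Hm).
  replace (w n - w m) with ((w n - w m0) - (w m - w m0)) by ring.
  pose proof (Rabs_triang (w n - w m0) (- (w m - w m0))). rewrite Rabs_Ropp in H2.
  unfold Rminus at 1. lra.
Qed.

Lemma complete N (u : nat -> coef_seq) (rho : nat -> R) :
  (forall m k j, (N < j)%nat -> u m k j = C0) ->
  (forall e, 0 < e -> exists m, rho m < e) ->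
  (forall m, 0 <= rho m) ->
  (forall m M, (m <= M)%nat -> nb N (fsub (u M) (u m)) (rho m ^ 2)) ->
  exists v, (forall k j, (N < j)%nat -> v k j = C0) /\
    (forall k j, (j <= N)%nat -> Un_cv (fun M => fst (u M k j)) (fst (v k j)) /\
                                 Un_cv (fun M => snd (u M k j)) (snd (v k j))) /\
    (forall m c, (forall M, (m <= M)%nat -> nb N (fsub (u M) (u m)) c) -> nb N (fsub v (u m)) c).
Proof.
  intros Hs Hr Hr0 Hc.
  assert (Cc: forall k j, (j <= N)%nat -> Cauchy_crit (fun M => fst (u M k j)) /\ Cauchy_crit (fun M => snd (u M k j))).
  { intros k j Hj. split; apply (coord_cauchy _ rho Hr); intros m M HmM;
    pose proof (nb_coord N _ _ k j Hj (Hc m M HmM)) as E; unfold fsub, Csub, Cnorm2 in E; simpl in E;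
    apply sq_le_abs; auto; pose proof (pow2_ge_0 (fst (u M k j) - fst (u m k j))); pose proof (pow2_ge_0 (snd (u M k j) - snd (u m k j))); lra. }
  set (v := fun k j => if Nat.leb j N then (lim_of (fun M => fst (u M k j)), lim_of (fun M => snd (u M k j))) else C0).
  assert (Hv: forall k j, (j <= N)%nat -> Un_cv (fun M => fst (u M k j)) (fst (v k j)) /\
                                 Un_cv (fun M => snd (u M k j)) (snd (v k j))).
  { intros k j Hj. unfold v. replace (Nat.leb j N) with true by (symmetry; apply Nat.leb_le; auto).
    simpl. destruct (Cc k j Hj) as [C1 C2]. split; apply lim_of_spec.
    - destruct (R_complete _ C1) as [l Hl]; eauto.
    - destruct (R_complete _ C2) as [l Hl]; eauto. }
  exists v. split; [|split; auto].
  - intros k j Hj. unfold v. replace (Nat.leb j N) with false; auto. symmetry; apply Nat.leb_gt; auto.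
  - intros m c H n.
    apply (cv_le_ev (fun M => Sn N (fsub (u M) (u m)) n)).
    + apply Sn_cv. intros k j Hj. destruct (Hv k j Hj) as [H1 H2]. unfold fsub, Csub; simpl.
      split; apply CV_minus; auto; apply cv_const.
    + exists m. intros M HM. apply H; auto.
Qed.

Lemma nb_sym N a b c : nb N (fsub a b) c -> nb N (fsub b a) c.
Proof.
  intros H. apply (nb_ext N (fscale (rs (-1)) (fsub a b))).
  - intros; ceq.
  - replace c with ((-1)^2 * c) by ring. apply nb_scale; auto.
Qed.

Lemma nb_self N x : nb N (fsub x x) 0.
Proof. apply (nb_ext N fzero); [intros; ceq| apply nb_zero]. Qed.

Lemma half_pow_small e : 0 < e -> exists i, (/2)^i < e.
Proof.
  intros He. destruct (pow_lt_1_zero (/2) ltac:(rewrite Rabs_right; lra) e He) as [n Hn].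
  exists n. specialize (Hn n (le_n n)). rewrite Rabs_right in Hn; auto.
  apply Rle_ge, pow_le; lra.
Qed.

Section Baire.
Variable N : nat.
Variable F : nat -> coef_seq -> Prop.
Hypothesis Fclosed : forall m y, inH N y -> (forall e, 0 < e -> exists y', F m y' /\ nb N (fsub y y') e) -> F m y.
Hypothesis Fcover : forall y, inH N y -> exists m, F m y.

Definition bspec (i : nat) (s s' : coef_seq * R) : Prop :=
  inH N (fst s') /\ 0 < snd s' /\ snd s' <= snd s / 2 /\
  nb N (fsub (fst s') (fst s)) ((snd s / 2)^2) /\
  forall z, nb N (fsub z (fst s')) (snd s' ^ 2) -> ~ F i z.

Hypothesis Hneg : forall m x0 r, 0 < r -> inH N x0 -> exists y, inH N y /\ nb N (fsub y x0) (r^2) /\ ~ F m y.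

Lemma bstep i s : inH N (fst s) -> 0 < snd s -> exists s', bspec i s s'.
Proof.
  intros Hx Hr. destruct s as [x r]; cbn [fst snd] in *.
  destruct (Hneg i x (r/2) ltac:(lra) Hx) as [y [Hy [Hyx HF]]].
  assert (Ex: exists e, 0 < e /\ forall y', F i y' -> ~ nb N (fsub y y') e).
  { apply NNPP. intros Hn. apply HF. apply Fclosed; auto. intros e He.
    apply NNPP. intros Hn2. apply Hn. exists e. split; auto. intros y' Hy' Hb. apply Hn2. eauto. }
  destruct Ex as [e [He Hee]].
  set (r' := Rmin (r/2) (Rmin e 1)).
  assert (Hr': 0 < r') by (unfold r'; repeat apply Rmin_glb_lt; lra).
  assert (Hr1: r' <= r/2) by apply Rmin_l.
  assert (Hr2: r' <= e) by (unfold r'; eapply Rle_trans; [apply Rmin_r| apply Rmin_l]).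
  assert (Hr3: r' <= 1) by (unfold r'; eapply Rle_trans; [apply Rmin_r| apply Rmin_r]).
  exists (y, r'). unfold bspec; cbn [fst snd]. split; [exact Hy|]. split; [auto|]. split; [auto|]. split; [auto|].
  intros z Hz HFz. apply (Hee z HFz). apply nb_sym. eapply nb_weaken; [|exact Hz]. nra.
Qed.

Definition binh : inhabited (coef_seq * R) := inhabits (fzero, 1).

Fixpoint bseq (i : nat) : coef_seq * R :=
  match i with
  | O => (fzero, 1)
  | S i => epsilon binh (bspec i (bseq i))
  end.

Lemma bseq_ok i : inH N (fst (bseq i)) /\ 0 < snd (bseq i) /\ bspec i (bseq i) (bseq (S i)).
Proof.
  induction i.
  - assert (H0: inH N fzero) by (apply (nb_inH N fzero 0); [intros; reflexivity| apply nb_zero]).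
    assert (bspec 0 (bseq 0) (bseq 1)).
    { simpl. apply epsilon_spec. apply bstep; simpl; auto; lra. }
    split; [exact H0|]. split; [simpl; lra| exact H].
  - destruct IHi as [H1 [H2 H3]].
    assert (inH N (fst (bseq (S i))) /\ 0 < snd (bseq (S i))) as [A B] by (destruct H3 as [? [? _]]; auto).
    split; [exact A|]. split; [exact B|].
    change (bspec (S i) (bseq (S i)) (epsilon binh (bspec (S i) (bseq (S i))))).
    apply epsilon_spec. apply bstep; auto.
Qed.

Lemma bseq_rho i : snd (bseq i) <= (/2)^i.
Proof.
  induction i; simpl; [lra|]. destruct (bseq_ok i) as [_ [_ [_ [_ [H _]]]]]. simpl in H. lra.
Qed.

Lemma bseq_cauchy i M : (i <= M)%nat -> nb N (fsub (fst (bseq M)) (fst (bseq i))) ((snd (bseq i) - snd (bseq M))^2) /\ snd (bseq M) <= snd (bseq i).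
Proof.
  intros H; induction H.
  - split; [|lra]. replace ((snd (bseq i) - snd (bseq i)) ^ 2) with 0 by ring. apply nb_self.
  - destruct IHle as [IH1 IH2].
    destruct (bseq_ok m) as [_ [Hp [_ [Hp' [Hle [Hb _]]]]]].
    split; [|lra].
    apply (nb_ext N (fadd (fsub (fst (bseq (S m))) (fst (bseq m))) (fsub (fst (bseq m)) (fst (bseq i))))).
    { intros; ceq. }
    eapply nb_weaken; [| apply nb_add; [| | exact Hb| exact IH1]]; try lra.
    assert (0 <= snd (bseq m) / 2 + (snd (bseq i) - snd (bseq m))) by lra.
    apply pow_incr; split; auto. lra.
Qed.

Lemma baire_contra : False.
Proof.
  destruct (complete N (fun M => fst (bseq M)) (fun M => snd (bseq M))) as [v [Hvs [_ Hv]]].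
  - intros m k j Hj. destruct (bseq_ok m) as [[Hs _] _]. auto.
  - intros e He. destruct (half_pow_small e He) as [i Hi]. exists i. pose proof (bseq_rho i). lra.
  - intros m. destruct (bseq_ok m) as [_ [H _]]. lra.
  - intros m M HmM. destruct (bseq_cauchy m M HmM) as [H1 H2]. destruct (bseq_ok M) as [_ [H3 _]].
    eapply nb_weaken; [|exact H1]. apply pow_incr. lra.
  - assert (inH N v).
    { apply (nb_inH N v 1); auto.
      apply (nb_ext N (fsub v (fst (bseq 0)))); [intros; ceq|].
      apply Hv. intros M HM. destruct (bseq_cauchy 0 M HM) as [H1 H2]. destruct (bseq_ok M) as [_ [H3 _]].
      eapply nb_weaken; [|exact H1]. simpl in *. nra. }
    destruct (Fcover v H) as [m Hm].
    destruct (bseq_ok m) as [_ [_ [_ [_ [_ [_ Hsep]]]]]].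
    apply (Hsep v); auto. apply Hv. intros M HM.
    destruct (bseq_cauchy (S m) M HM) as [H1 H2]. destruct (bseq_ok M) as [_ [H3 _]].
    eapply nb_weaken; [|exact H1]. apply pow_incr. lra.
Qed.
End Baire.

Lemma baire N (F : nat -> coef_seq -> Prop) :
  (forall m y, inH N y -> (forall e, 0 < e -> exists y', F m y' /\ nb N (fsub y y') e) -> F m y) ->
  (forall y, inH N y -> exists m, F m y) ->
  exists m x0 r, 0 < r /\ inH N x0 /\ forall y, inH N y -> nb N (fsub y x0) (r^2) -> F m y.
Proof.
  intros Hc Hcov. apply NNPP. intros Hn. apply (baire_contra N F Hc Hcov).
  intros m x0 r Hr Hx. apply NNPP. intros Hn2. apply Hn. exists m, x0, r. split; [exact Hr|]. split; [exact Hx|].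
  intros y Hy Hb. apply NNPP. intros HF. apply Hn2. exists y. auto.
Qed.

Lemma nat_above c : exists m : nat, c <= INR m.
Proof.
  destruct (archimed c) as [H1 _]. destruct (Z_lt_le_dec (up c) 0) as [Hz|Hz].
  - exists 0%nat. apply IZR_lt in Hz. simpl. lra.
  - exists (Z.to_nat (up c)). rewrite INR_IZR_INZ, Z2Nat.id; auto. lra.
Qed.

Lemma nb_sq N a c : nb N a c -> nb N a ((sqrt c)^2).
Proof. intros H. pose proof (nb_ge0 N a c H). rewrite pow2_sqrt; auto. Qed.

Lemma fext (f g : coef_seq) : (forall k j, f k j = g k j) -> f = g.
Proof. intros H; apply functional_extensionality; intro k; apply functional_extensionality; intro j; auto. Qed.

Lemma inH_add N a b : inH N a -> inH N b -> inH N (fadd a b).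
Proof.
  intros Ha Hb. destruct (inH_nb N a Ha) as [c1 H1]. destruct (inH_nb N b Hb) as [c2 H2].
  apply (nb_inH N _ ((sqrt c1 + sqrt c2)^2)).
  - intros k j Hj. destruct Ha as [Ha _]; destruct Hb as [Hb _]. unfold fadd. rewrite Ha, Hb; auto. ceq.
  - apply nb_add; try apply sqrt_pos; apply nb_sq; auto.
Qed.

Lemma inH_sub N a b : inH N a -> inH N b -> inH N (fsub a b).
Proof.
  intros Ha Hb. destruct (inH_nb N a Ha) as [c1 H1]. destruct (inH_nb N b Hb) as [c2 H2].
  apply (nb_inH N _ ((sqrt c1 + sqrt c2)^2)).
  - intros k j Hj. destruct Ha as [Ha _]; destruct Hb as [Hb _]. unfold fsub. rewrite Ha, Hb; auto. ceq.
  - apply nb_sub; try apply sqrt_pos; apply nb_sq; auto.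
Qed.

Lemma inH_scale N t a : inH N a -> inH N (fscale (rs t) a).
Proof.
  intros Ha. destruct (inH_nb N a Ha) as [c1 H1].
  apply (nb_inH N _ (t^2 * c1)).
  - intros k j Hj. destruct Ha as [Ha _]. unfold fscale. rewrite Ha; auto. ceq.
  - apply nb_scale; auto.
Qed.

Lemma Hp_sub N a b : inHplus N a -> inHplus N b -> inHplus N (fsub a b).
Proof.
  intros [Ha Ha'] [Hb Hb']. split; [apply inH_sub; auto|].
  intros k j Hk. unfold fsub. rewrite Ha', Hb'; auto. ceq.
Qed.

Lemma Hp_scale N t a : inHplus N a -> inHplus N (fscale (rs t) a).
Proof.
  intros [Ha Ha']. split; [apply inH_scale; auto|].
  intros k j Hk. unfold fscale. rewrite Ha'; auto. ceq.
Qed.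

Lemma Csub_zero a b : Csub a b = C0 -> a = b.
Proof.
  destruct a as [x y], b as [u v]; unfold Csub, C0; simpl. intros H. inversion H.
  f_equal; lra.
Qed.

Lemma nb_add_c N a b c1 c2 : nb N a c1 -> nb N b c2 -> nb N (fadd a b) ((sqrt c1 + sqrt c2)^2).
Proof. intros; apply nb_add; try apply sqrt_pos; apply nb_sq; auto. Qed.
Lemma nb_sub_c N a b c1 c2 : nb N a c1 -> nb N b c2 -> nb N (fsub a b) ((sqrt c1 + sqrt c2)^2).
Proof. intros; apply nb_sub; try apply sqrt_pos; apply nb_sq; auto. Qed.

Lemma sqrt_quarter e : 0 <= e -> (sqrt (e/4) + sqrt (e/4))^2 = e.
Proof.
  intros He. replace ((sqrt (e/4) + sqrt (e/4))^2) with (4 * (sqrt (e/4))^2) by ring.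
  rewrite pow2_sqrt; lra.
Qed.

Section OM.
Variable N : nat.
Variable P : coef_seq -> Prop.
Hypothesis Psub : is_subspace N P.
Hypothesis Pcl : is_closed N P.
Hypothesis Pds : direct_sum_Hplus N P.

Definition dec (y p : coef_seq) := P p /\ inHplus N (fsub y p).

Lemma P_inH p : P p -> inH N p.
Proof. destruct Psub as [H _]; auto. Qed.
Lemma P_add p q : P p -> P q -> P (fadd p q).
Proof. destruct Psub as [_ [_ [H _]]]; auto. Qed.
Lemma P_scale t p : P p -> P (fscale (rs t) p).
Proof. destruct Psub as [_ [_ [_ H]]]; auto. Qed.
Lemma P_sub p q : P p -> P q -> P (fsub p q).
Proof.
  intros Hp Hq. replace (fsub p q) with (fadd p (fscale (rs (-1)) q)).
  - apply P_add; auto; apply P_scale; auto.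
  - apply fext; intros; ceq.
Qed.

Lemma dec_inH y p : dec y p -> inH N y.
Proof.
  intros [Hp [Hh _]]. replace y with (fadd (fsub y p) p).
  - apply inH_add; auto. apply P_inH; auto.
  - apply fext; intros; ceq.
Qed.

Lemma dec_exists y : inH N y -> exists p, dec y p.
Proof.
  intros Hy. destruct Pds as [H _]. destruct (H y Hy) as [p [h [Hp [Hh E]]]].
  exists p. split; auto. replace (fsub y p) with h; auto.
  apply fext; intros k j. unfold fsub. rewrite E. ceq.
Qed.

Lemma dec_unique y p1 p2 : dec y p1 -> dec y p2 -> forall k j, p1 k j = p2 k j.
Proof.
  intros [H1 H1'] [H2 H2'] k j. destruct Pds as [_ H].
  apply Csub_zero. change (fsub p1 p2 k j = C0). apply H.
  - apply P_sub; auto.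
  - replace (fsub p1 p2) with (fsub (fsub y p2) (fsub y p1)).
    + apply Hp_sub; auto.
    + apply fext; intros; ceq.
Qed.

Definition Fm (m : nat) (y : coef_seq) : Prop :=
  forall e, 0 < e -> exists y' p, dec y' p /\ nb N p (INR m) /\ nb N (fsub y y') e.

Lemma Fm_closed m y : inH N y -> (forall e, 0 < e -> exists y', Fm m y' /\ nb N (fsub y y') e) -> Fm m y.
Proof.
  intros Hy H e He. destruct (H (e/4) ltac:(lra)) as [y'' [Hf Hb]].
  destruct (Hf (e/4) ltac:(lra)) as [y' [p [Hd [Hp Hb']]]].
  exists y', p. split; auto. split; auto.
  rewrite <- (sqrt_quarter e) by lra.
  apply (nb_ext N (fadd (fsub y y'') (fsub y'' y'))); [intros; ceq|].
  apply nb_add_c; auto.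
Qed.

Lemma Fm_cover y : inH N y -> exists m, Fm m y.
Proof.
  intros Hy. destruct (dec_exists y Hy) as [p Hd].
  destruct (inH_nb N p (P_inH p (proj1 Hd))) as [c Hc].
  destruct (nat_above c) as [m Hm]. exists m. intros e He. exists y, p.
  split; auto. split; [eapply nb_weaken; eauto|].
  eapply nb_weaken; [|apply nb_self]. lra.
Qed.

Lemma approx : exists k, 0 <= k /\ forall y s d, inH N y -> 0 < s -> nb N y (s^2) -> 0 < d ->
  exists y' p, dec y' p /\ nb N p ((k * s)^2) /\ nb N (fsub y y') (d^2).
Proof.
  destruct (baire N Fm Fm_closed Fm_cover) as [m [x0 [r [Hr [Hx0 HB]]]]].
  set (a := sqrt (INR m)).
  assert (A0: forall y, inH N y -> nb N y (r^2) -> forall e, 0 < e ->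
     exists y' p, dec y' p /\ nb N p ((a + a)^2) /\ nb N (fsub y y') e).
  { intros y Hy Hyb e He.
    assert (F1: Fm m (fadd x0 y)).
    { apply HB. apply inH_add; auto. apply (nb_ext N y); [intros; ceq| auto]. }
    assert (F2: Fm m x0).
    { apply HB; auto. eapply nb_weaken; [|apply nb_self]. nra. }
    destruct (F1 (e/4) ltac:(lra)) as [y1 [p1 [[Hd1 Hd1'] [Hp1 Hb1]]]].
    destruct (F2 (e/4) ltac:(lra)) as [y2 [p2 [[Hd2 Hd2'] [Hp2 Hb2]]]].
    exists (fsub y1 y2), (fsub p1 p2). split; [split|split].
    - apply P_sub; auto.
    - replace (fsub (fsub y1 y2) (fsub p1 p2)) with (fsub (fsub y1 p1) (fsub y2 p2)).
      + apply Hp_sub; auto.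
      + apply fext; intros; ceq.
    - apply nb_sub; try apply sqrt_pos; apply nb_sq; auto.
    - rewrite <- (sqrt_quarter e) by lra.
      apply (nb_ext N (fsub (fsub (fadd x0 y) y1) (fsub x0 y2))); [intros; ceq|].
      apply nb_sub_c; auto. }
  exists ((a + a) / r). split.
  { unfold a. apply Rmult_le_pos; [pose proof (sqrt_pos (INR m)); lra| apply Rlt_le, Rinv_0_lt_compat; lra]. }
  intros y s d Hy Hs Hyb Hd.
  set (t := r / s). assert (Ht: 0 < t) by (unfold t; apply Rdiv_lt_0_compat; lra).
  destruct (A0 (fscale (rs t) y) (inH_scale N t y Hy)) with (e := (t * d)^2) as [y'' [p'' [[Hd1 Hd2] [Hp Hb]]]].
  { replace (r^2) with (t^2 * s^2) by (unfold t; field; lra). apply nb_scale; auto. }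
  { apply pow_lt. nra. }
  exists (fscale (rs (/t)) y''), (fscale (rs (/t)) p''). split; [split|split].
  - apply P_scale; auto.
  - replace (fsub (fscale (rs (/ t)) y'') (fscale (rs (/ t)) p'')) with (fscale (rs (/t)) (fsub y'' p'')).
    + apply Hp_scale; auto.
    + apply fext; intros; ceq.
  - replace (((a + a) / r * s) ^ 2) with ((/t)^2 * (a + a)^2) by (unfold t; field; split; lra).
    apply nb_scale; auto.
  - apply (nb_ext N (fscale (rs (/t)) (fsub (fscale (rs t) y) y''))).
    + intros k j. unfold fsub, fscale, Csub, Cmul, rs. apply injective_projections; simpl; field; lra.
    + replace (d^2) with ((/t)^2 * (t * d)^2) by (field; lra). apply nb_scale; auto.
Qed.
End OM.

Lemma half_pow_mono n M : (n <= M)%nat -> (/2)^M <= (/2)^n.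
Proof.
  intros H; induction H; [lra|]. simpl. assert (0 <= (/2)^m) by (apply pow_le; lra). lra.
Qed.

Lemma half_pow_pos n : 0 < (/2)^n.
Proof. apply pow_lt; lra. Qed.

Lemma cv_zero_bound (w : nat -> R) (b : R) : 0 <= b -> (forall n, Rabs (w n) <= b * (/2)^n) -> Un_cv w 0.
Proof.
  intros Hb H e He. destruct (half_pow_small (e / (b + 1))) as [n0 Hn0].
  { apply Rdiv_lt_0_compat; lra. }
  exists n0. intros n Hn. unfold Rdist. rewrite Rminus_0_r.
  eapply Rle_lt_trans; [apply H|].
  pose proof (half_pow_mono n0 n Hn). pose proof (half_pow_pos n).
  assert ((/2)^n * (b+1) < e).
  { apply (Rmult_lt_reg_r (/ (b+1))). apply Rinv_0_lt_compat; lra.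
    rewrite Rmult_assoc, Rinv_r by lra. unfold Rdiv in Hn0. lra. }
  nra.
Qed.

Section Iter.
Variable N : nat.
Variable P : coef_seq -> Prop.
Hypothesis Psub : is_subspace N P.
Hypothesis Pcl : is_closed N P.
Hypothesis Pds : direct_sum_Hplus N P.
Variable k : R.
Hypothesis Hk : 0 <= k.
Hypothesis Happ : forall y s d, inH N y -> 0 < s -> nb N y (s^2) -> 0 < d ->
  exists y' p, dec N P y' p /\ nb N p ((k * s)^2) /\ nb N (fsub y y') (d^2).

Variable y p : coef_seq.
Variable s d : R.
Hypothesis Hdec : dec N P y p.
Hypothesis Hs : 0 < s.
Hypothesis Hd : 0 < d.
Hypothesis Hyb : nb N y (s^2).

Definition sig (i : nat) : R := match i with O => s | _ => d * (/2)^i end.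

Lemma sig_pos i : 0 < sig i.
Proof. destruct i; simpl; auto. pose proof (half_pow_pos i). nra. Qed.

Definition ispec (i : nat) (e : coef_seq) (q : coef_seq * coef_seq) : Prop :=
  dec N P (fst q) (snd q) /\ nb N (snd q) ((k * sig i)^2) /\ nb N (fsub e (fst q)) ((sig (S i))^2).

Definition inh2 : inhabited (coef_seq * coef_seq) := inhabits (fzero, fzero).
Definition ch (i : nat) (e : coef_seq) := epsilon inh2 (ispec i e).

Fixpoint es (i : nat) : coef_seq :=
  match i with O => y | S i => fsub (es i) (fst (ch i (es i))) end.

Definition yy i := fst (ch i (es i)).
Definition pp i := snd (ch i (es i)).

Lemma es_ok i : inH N (es i) /\ nb N (es i) ((sig i)^2) /\ ispec i (es i) (ch i (es i)).
Proof.
  assert (A: forall i, inH N (es i) -> nb N (es i) ((sig i)^2) -> ispec i (es i) (ch i (es i))).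
  { intros i0 H1 H2. unfold ch. apply epsilon_spec.
    destruct (Happ (es i0) (sig i0) (sig (S i0)) H1 (sig_pos i0) H2 (sig_pos (S i0))) as [y' [p' H]].
    exists (y', p'). exact H. }
  induction i.
  - assert (inH N (es 0)) by (exact (dec_inH N P Psub y p Hdec)).
    split; [auto|]. split; [exact Hyb|]. apply A; auto.
  - destruct IHi as [H1 [H2 H3]]. destruct H3 as [H3 [H4 H5]].
    assert (inH N (es (S i))).
    { simpl. apply inH_sub; auto. apply (dec_inH N P Psub _ (snd (ch i (es i)))); auto. }
    split; [auto|]. split; [auto|]. apply A; auto.
Qed.

Fixpoint psum (n : nat) : coef_seq :=
  match n with O => pp 0 | S n => fadd (psum n) (pp (S n)) end.

Lemma psum_P n : P (psum n).
Proof.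
  induction n; simpl.
  - destruct (es_ok 0) as [_ [_ [[H _] _]]]. exact H.
  - apply (P_add N P Psub); auto. destruct (es_ok (S n)) as [_ [_ [[H _] _]]]. exact H.
Qed.

Lemma psum_cauchy n M : (n <= M)%nat -> nb N (fsub (psum M) (psum n)) ((k * d * ((/2)^n - (/2)^M))^2).
Proof.
  intros H; induction H.
  - replace ((k * d * ((/2)^n - (/2)^n))^2) with 0 by ring. apply nb_self.
  - apply (nb_ext N (fadd (fsub (psum m) (psum n)) (pp (S m)))); [intros; simpl; ceq|].
    destruct (es_ok (S m)) as [_ [_ [_ [Hp _]]]].
    pose proof (half_pow_mono n m H). pose proof (half_pow_pos m).
    replace (k * d * ((/2)^n - (/2)^(S m))) with (k * d * ((/2)^n - (/2)^m) + k * sig (S m)).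
    + apply nb_add; auto.
      * apply Rmult_le_pos; [apply Rmult_le_pos; lra| lra].
      * apply Rmult_le_pos; auto. apply Rlt_le, sig_pos.
    + unfold sig. simpl. set (q:=(/2)^m). set (q':=(/2)^n). field.
Qed.

Definition rho (n : nat) := k * d * (/2)^n.

Lemma rho_ge0 n : 0 <= rho n.
Proof. unfold rho. pose proof (half_pow_pos n). apply Rmult_le_pos; [apply Rmult_le_pos|]; lra. Qed.

Lemma rho_mono n M : (n <= M)%nat -> rho M <= rho n.
Proof. intros H. unfold rho. pose proof (half_pow_mono n M H). apply Rmult_le_compat_l; [apply Rmult_le_pos|]; lra. Qed.

Lemma rho_small e : 0 < e -> exists n, rho n < e.
Proof.
  intros He. destruct (half_pow_small (e / (k * d + 1))) as [n Hn].
  { apply Rdiv_lt_0_compat; auto. assert (0 <= k * d) by (apply Rmult_le_pos; lra). lra. }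
  exists n. unfold rho. assert (0 <= k * d) by (apply Rmult_le_pos; lra).
  pose proof (half_pow_pos n).
  assert ((/2)^n * (k * d + 1) < e).
  { apply (Rmult_lt_reg_r (/ (k * d + 1))). apply Rinv_0_lt_compat; lra.
    rewrite Rmult_assoc, Rinv_r by lra. unfold Rdiv in Hn. lra. }
  nra.
Qed.

Lemma yy_pp i kk j : (kk < 0)%Z -> yy i kk j = pp i kk j.
Proof.
  intros Hk'. destruct (es_ok i) as [_ [_ [[_ [_ H]] _]]]. apply Csub_zero. apply H; auto.
Qed.

Lemma y_split n kk j : (kk < 0)%Z -> y kk j = Cadd (psum n kk j) (es (S n) kk j).
Proof.
  intros Hk'. induction n.
  - change (y kk j = Cadd (pp 0 kk j) (Csub (y kk j) (yy 0 kk j))).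
    rewrite (yy_pp 0 kk j Hk'). ceq.
  - rewrite IHn. change (es (S (S n))) with (fsub (es (S n)) (yy (S n))).
    change (psum (S n)) with (fadd (psum n) (pp (S n))).
    change (Cadd (psum n kk j) (es (S n) kk j) = Cadd (Cadd (psum n kk j) (pp (S n) kk j)) (Csub (es (S n) kk j) (yy (S n) kk j))).
    rewrite (yy_pp (S n) kk j Hk'). ceq.
Qed.

Lemma iter_main : nb N p ((k * s + k * d)^2).
Proof.
  destruct (complete N psum rho) as [v [Hvs [Hvc Hv]]].
  - intros m kk j Hj. destruct (P_inH N P Psub _ (psum_P m)) as [H _]. auto.
  - apply rho_small.
  - apply rho_ge0.
  - intros m M HmM. eapply nb_weaken; [|apply psum_cauchy; auto].
    unfold rho. pose proof (half_pow_mono m M HmM). pose proof (half_pow_pos M). pose proof (half_pow_pos m).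
    assert (0 <= k * d) by (apply Rmult_le_pos; lra).
    apply pow_incr. split; [nra|]. nra.
  - assert (Hv0: nb N (fsub v (psum 0)) (rho 0 ^ 2)).
    { apply Hv. intros M HM. eapply nb_weaken; [|apply psum_cauchy; auto].
      unfold rho. pose proof (half_pow_mono 0 M HM). pose proof (half_pow_pos M).
      assert (0 <= k * d) by (apply Rmult_le_pos; lra). simpl in H. apply pow_incr. simpl. split; nra. }
    assert (Hvb: nb N v ((k * s + k * d)^2)).
    { apply (nb_ext N (fadd (psum 0) (fsub v (psum 0)))); [intros; ceq|].
      destruct (es_ok 0) as [_ [_ [_ [Hp0 _]]]].
      replace (k * d) with (rho 0) by (unfold rho; simpl; ring).
      apply nb_add; auto.
      - apply Rmult_le_pos; lra.
      - apply rho_ge0. }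
    assert (HvH: inH N v) by (apply (nb_inH N v _ Hvs Hvb)).
    assert (HvP: P v).
    { apply (Pcl psum); auto. apply psum_P.
      intros e He. destruct (rho_small (Rmin e 1)) as [M HM].
      { apply Rmin_glb_lt; lra. }
      exists M. intros m Hm.
      assert (Hb: nb N (fsub (psum m) v) (rho m ^ 2)).
      { apply nb_sym. apply Hv. intros M' HM'. eapply nb_weaken; [|apply psum_cauchy; auto].
        unfold rho. pose proof (half_pow_mono m M' HM'). pose proof (half_pow_pos M'). pose proof (half_pow_pos m).
        assert (0 <= k * d) by (apply Rmult_le_pos; lra).
        apply pow_incr. split; nra. }
      destruct (nb_sum N _ _ Hb) as [l [Hl Hle]]. exists l. split; auto.
      pose proof (rho_mono M m Hm). pose proof (rho_ge0 m). pose proof (Rmin_l e 1). pose proof (Rmin_r e 1).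
      assert (rho m < 1) by lra. assert (rho m < e) by lra.
      assert (rho m ^ 2 <= rho m) by (simpl; nra). lra. }
    assert (Hdv: dec N P y v).
    { split; auto. split.
      - apply inH_sub; auto. exact (dec_inH N P Psub y p Hdec).
      - intros kk j Hk'. destruct (le_lt_dec j N) as [Hj|Hj].
        + destruct (Hvc kk j Hj) as [C1 C2].
          assert (E: forall n, y kk j = Cadd (psum n kk j) (es (S n) kk j)) by (intros; apply y_split; auto).
          assert (Z1: forall n, Rabs (fst (es (S n) kk j)) <= d * (/2)^(S n) /\ Rabs (snd (es (S n) kk j)) <= d * (/2)^(S n)).
          { intros n. destruct (es_ok (S n)) as [_ [Hb _]]. pose proof (nb_coord N _ _ kk j Hj Hb) as Hc.
            unfold Cnorm2 in Hc. change (sig (S n)) with (d * (/2)^(S n)) in Hc. pose proof (half_pow_pos (S n)). assert (0 <= d * (/2)^(S n)) by nra.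
            pose proof (pow2_ge_0 (fst (es (S n) kk j))). pose proof (pow2_ge_0 (snd (es (S n) kk j))).
            split; apply sq_le_abs; try nra. }
          assert (L1: Un_cv (fun n => fst (es (S n) kk j)) 0).
          { apply (cv_zero_bound _ (d / 2)); [lra|]. intros n. destruct (Z1 n) as [Z _]. replace (d / 2 * (/2)^n) with (d * (/2)^(S n)) by (simpl; field). exact Z. }
          assert (L2: Un_cv (fun n => snd (es (S n) kk j)) 0).
          { apply (cv_zero_bound _ (d / 2)); [lra|]. intros n. destruct (Z1 n) as [_ Z]. replace (d / 2 * (/2)^n) with (d * (/2)^(S n)) by (simpl; field). exact Z. }
          assert (U1: fst (y kk j) = fst (v kk j) + 0).
          { apply (UL_sequence (fun _ => fst (y kk j))); [apply cv_const|].
            apply (Un_cv_ext (fun n => fst (psum n kk j) + fst (es (S n) kk j))).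
            - intros n. rewrite (E n). reflexivity.
            - apply CV_plus; auto. }
          assert (U2: snd (y kk j) = snd (v kk j) + 0).
          { apply (UL_sequence (fun _ => snd (y kk j))); [apply cv_const|].
            apply (Un_cv_ext (fun n => snd (psum n kk j) + snd (es (S n) kk j))).
            - intros n. rewrite (E n). reflexivity.
            - apply CV_plus; auto. }
          unfold fsub, Csub, C0. f_equal; lra.
        + destruct (dec_inH N P Psub y p Hdec) as [Hy _]. unfold fsub. rewrite Hy, Hvs; auto. ceq. }
    apply (nb_ext N v); auto. intros. symmetry. apply (dec_unique N P Psub Pds y); auto.
Qed.
End Iter.

Lemma bound N P : is_subspace N P -> is_closed N P -> direct_sum_Hplus N P ->
  exists k, 0 <= k /\ forall y p s, dec N P y p -> 0 < s -> nb N y (s^2) -> nb N p ((k*s)^2).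
Proof.
  intros Psub Pcl Pds. destruct (approx N P Psub Pds) as [k [Hk Happ]].
  exists k. split; auto. intros y p s Hd Hs Hy.
  apply nb_lim. intros dd Hdd.
  set (D := k^2 * (2 * s + 1) + 1).
  assert (HD: 0 < D) by (unfold D; nra).
  set (dl := Rmin 1 (dd / D)).
  assert (Hdl: 0 < dl) by (unfold dl; apply Rmin_glb_lt; [lra| apply Rdiv_lt_0_compat; lra]).
  assert (Hdl1: dl <= 1) by apply Rmin_l.
  assert (Hdl2: dl * D <= dd).
  { unfold dl. pose proof (Rmin_r 1 (dd / D)).
    apply (Rmult_le_compat_r D) in H; [|lra]. unfold Rdiv in H. rewrite Rmult_assoc, Rinv_l in H; lra. }
  eapply nb_weaken; [| apply (iter_main N P Psub Pcl Pds k Hk Happ y p s dl); auto].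
  unfold D in Hdl2. nra.
Qed.

Definition negp (q : coef_seq) : coef_seq := fun kk j => if (kk <? 0)%Z then q kk j else C0.

Lemma dec_neg N P q : is_subspace N P -> P q -> dec N P (negp q) q.
Proof.
  intros Psub Hq. split; auto.
  assert (Hi: inH N q) by (destruct Psub as [H _]; auto).
  destruct (inH_nb N q Hi) as [c Hc].
  split; [split|].
  - intros kk j Hj. destruct Hi as [Hs _]. unfold fsub, negp. destruct (kk <? 0)%Z; rewrite Hs; auto; ceq.
  - destruct (nb_sum N (fsub (negp q) q) (1 * c + 0 * c)) as [l [Hl _]]; [|eauto].
    intros n. eapply Rle_trans; [apply (Sn_le_lin N _ q q 1 0)|].
    + intros kk j. unfold fsub, negp. destruct (kk <? 0)%Z.
      * replace (Csub (q kk j) (q kk j)) with (0, 0) by ceq. pose proof (Cnorm2_ge0 (q kk j)).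
        replace (Cnorm2 (0, 0)) with 0 by (unfold Cnorm2; simpl; ring). lra.
      * replace (Cnorm2 (Csub C0 (q kk j))) with (Cnorm2 (q kk j)); [lra|].
        unfold Cnorm2, Csub, C0; simpl; ring.
    + specialize (Hc n). lra.
  - intros kk j Hk. unfold fsub, negp. replace (kk <? 0)%Z with true by (symmetry; apply Z.ltb_lt; auto). ceq.
Qed.

Lemma sum_shift (a : nat -> R) n m :
  sum_f_R0 (fun i => a (i + n + 1)%nat) m = sum_f_R0 a (m + n + 1) - sum_f_R0 a n.
Proof.
  induction m.
  - simpl. replace (n + 1)%nat with (S n) by lia. simpl. ring.
  - simpl sum_f_R0 at 1. rewrite IHm. replace (S m + n + 1)%nat with (S (m + n + 1)) by lia.
    simpl. replace (S (m + n + 1)) with (S m + n + 1)%nat by lia. ring.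
Qed.

Lemma neg_shift_le N (f g : coef_seq) n :
  (forall kk j, f kk j = g (kk + Z.of_nat (S n))%Z j) ->
  forall i, l2_terms N (negp g) i <= l2_terms N f (i + n + 1).
Proof.
  intros Hfg i. unfold l2_terms.
  assert (A: vnorm2 N (negp g (Z.of_nat i)) <= vnorm2 N (f (Z.of_nat (i + n + 1)))).
  { unfold vnorm2. apply sum_Rle. intros j _. unfold negp.
    replace (Z.of_nat i <? 0)%Z with false by (symmetry; apply Z.ltb_ge; lia).
    unfold Cnorm2 at 1, C0; simpl. pose proof (Cnorm2_ge0 (f (Z.of_nat (i + n + 1)) j)). lra. }
  assert (B: vnorm2 N (negp g (- (Z.of_nat i + 1))%Z) = vnorm2 N (f (- (Z.of_nat (i + n + 1) + 1))%Z)).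
  { unfold vnorm2. apply sum_eq. intros j _. unfold negp.
    replace (- (Z.of_nat i + 1) <? 0)%Z with true by (symmetry; apply Z.ltb_lt; lia).
    rewrite Hfg. f_equal. f_equal. lia. }
  lra.
Qed.

Theorem lemmaA2 (N : nat) (P : coef_seq -> Prop) :
  is_subspace N P ->
  is_closed N P ->
  (forall f, P f -> P (zinv_pow 1 f)) ->
  direct_sum_Hplus N P ->
  forall f : coef_seq,
    (forall n : nat, exists g, P g /\ forall k j, f k j = zinv_pow n g k j) ->
    forall k j, f k j = C0.
Proof.
  intros Psub Pcl _ Pds f Hf k0 j0.
  destruct (Hf 0%nat) as [g0 [Hg0 E0]].
  assert (Hfi: inH N f).
  { replace f with g0. destruct Psub as [H _]; auto.
    apply fext; intros kk j. rewrite E0. unfold zinv_pow. f_equal. lia. }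
  destruct (le_lt_dec j0 N) as [Hj|Hj]; [| destruct Hfi as [Hs _]; auto].
  destruct (bound N P Psub Pcl Pds) as [kb [Hkb Hb]].
  destruct Hfi as [_ [L HL]].
  assert (Hsm: forall e, 0 < e -> Cnorm2 (f k0 j0) <= kb^2 * e).
  { intros e He. destruct (HL e He) as [n Hn]. specialize (Hn n (le_n n)).
    destruct (Hf (S n)) as [g [Hg Eg]].
    assert (Hneg: nb N (negp g) e).
    { intros m. unfold Sn.
      apply (Rle_trans _ (sum_f_R0 (fun i => l2_terms N f (i + n + 1)) m)).
      { apply sum_Rle; intros i _; apply (neg_shift_le N f g n Eg). }
      rewrite sum_shift.
      assert (G: Un_growing (sum_f_R0 (l2_terms N f))).
      { intros q. simpl. pose proof (l2_terms_ge0 N f (S q)). lra. }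
      pose proof (growing_ineq (sum_f_R0 (l2_terms N f)) L G HL (m+n+1)).
      unfold Rdist in Hn. apply Rabs_def2 in Hn. lra. }
    assert (Hse: nb N (negp g) ((sqrt e)^2)) by (rewrite pow2_sqrt; [exact Hneg| lra]).
    pose proof (Hb (negp g) g (sqrt e) (dec_neg N P g Psub Hg) (sqrt_lt_R0 e He) Hse) as Hgb.
    rewrite Eg. unfold zinv_pow. eapply Rle_trans; [apply (nb_coord N g _ _ _ Hj Hgb)|].
    right. rewrite Rpow_mult_distr, pow2_sqrt; lra. }
  assert (Hz: Cnorm2 (f k0 j0) <= 0).
  { destruct (Rle_dec (Cnorm2 (f k0 j0)) 0) as [|Hn]; auto. exfalso.
    set (c := Cnorm2 (f k0 j0)) in *.
    assert (Hk1: 0 < kb^2 + 1) by nra.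
    specialize (Hsm (c / (kb^2 + 1)) ltac:(apply Rdiv_lt_0_compat; lra)).
    assert (kb^2 * (c / (kb^2+1)) < c).
    { apply (Rmult_lt_reg_r (kb^2+1)); auto. unfold Rdiv. rewrite Rmult_assoc, Rmult_assoc, Rinv_l by lra. nra. }
    lra. }
  unfold Cnorm2 in Hz. destruct (f k0 j0) as [x y]; simpl in Hz.
  unfold C0. f_equal; nra.
Qed.
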